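(* Let $g$ be an associative algebra equipped with a nondegenerate symmetric bilinear form $\langle\cdot,\cdot\rangle$ satisfying $\langle u v,w\rangle=\langle u,v w\rangle$. Let $n\ge1$ and $\mathbf{g}=g\oplus\cdots\oplus g$ ($n$ copies) with componentwise multiplication. Let $\mathbf{C},\mathbf{A}$ be linear operators on $\mathbf{g}$ written in components as $(\mathbf{C}(\mathbf{u}))_i=\sum_j C_{ij}(u_j)$, $(\mathbf{A}(\mathbf{u}))_i=\sum_j A_{ij}(u_j)$ with linear operators $C_{ij},A_{ij}$ on $g$. Then Hom$(\mathbf{C},\mathbf{A})$ holds on $\mathbf{g}$ if and only if: (1) Hom$(C_{ij},A_{jj})$ holds for all $1\le i,j\le n$; and (2) for all $1\le i,j,k\le n$ with $j<k$ and all $X,Y\in g$: $[C_{ij}(X),C_{ik}(Y)]=C_{ik}\big([A_{kj}(X),Y]\big)+C_{ij}\big([X,A_{jk}(Y)]\big)$.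
   Context: $[X,Y]=XY-YX$ (componentwise in $\mathbf{g}$). For linear operators $S,A$ on an associative algebra, Hom$(S,A)$ means $[S(X),S(Y)]=S\big([A(X),Y]+[X,A(Y)]\big)$ for all $X,Y$. *)

(* Defs.v *)
From mathcomp Require Import all_boot all_algebra.
Set Implicit Arguments. Unset Strict Implicit. Unset Printing Implicit Defensive.
Import GRing.Theory.
Local Open Scope ring_scope.

Definition comm (V : zmodType) (mul : V -> V -> V) (x y : V) : V :=
  mul x y - mul y x.

Definition HomRel (V : zmodType) (mul : V -> V -> V) (S A : V -> V) : Prop :=
  forall x y, comm mul (S x) (S y) = S (comm mul (A x) y + comm mul x (A y)).

Definition assoc_algebra (K : fieldType) (V : lmodType K) (mul : V -> V -> V) : Prop :=
  [/\ (forall a u v w, mul (a *: u + v) w = a *: mul u w + mul v w),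
      (forall a u v w, mul w (a *: u + v) = a *: mul w u + mul w v)
    & (forall u v w, mul (mul u v) w = mul u (mul v w))].

Definition invariant_form (K : fieldType) (V : lmodType K) (mul : V -> V -> V)
    (B : V -> V -> K) : Prop :=
  [/\ (forall a u v w, B (a *: u + v) w = a * B u w + B v w),
      (forall u v, B u v = B v u),
      (forall u, (forall v, B u v = 0) -> u = 0)
    & (forall u v w, B (mul u v) w = B u (mul v w))].

Definition bmul (K : fieldType) (V : lmodType K) (n : nat) (mul : V -> V -> V)
    (u v : {ffun 'I_n -> V}) : {ffun 'I_n -> V} :=
  [ffun i => mul (u i) (v i)].

Definition bop (K : fieldType) (V : lmodType K) (n : nat)
    (C : 'I_n -> 'I_n -> {linear V -> V}) (u : {ffun 'I_n -> V}) : {ffun 'I_n -> V} :=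
  [ffun i => \sum_(j < n) C i j (u j)].

(* Main.v *)
Require Import Defs.
From mathcomp Require Import all_boot all_algebra.
Import GRing.Theory.
Local Open Scope ring_scope.

Section Aux.
Variables (K : fieldType) (V : lmodType K) (mul : V -> V -> V).
Hypothesis hA : assoc_algebra mul.

Lemma mulDl' u v w : mul (u + v) w = mul u w + mul v w.
Proof. case: hA => h _ _. by rewrite -[u in LHS]scale1r h scale1r. Qed.
Lemma mulDr' u v w : mul w (u + v) = mul w u + mul w v.
Proof. case: hA => _ h _. by rewrite -[u in LHS]scale1r h scale1r. Qed.
Lemma mul0l' w : mul 0 w = 0.
Proof. by apply: (addrI (mul 0 w)); rewrite -mulDl' !addr0. Qed.
Lemma mul0r' w : mul w 0 = 0.
Proof. by apply: (addrI (mul w 0)); rewrite -mulDr' !addr0. Qed.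

Lemma commDl u v w : comm mul (u + v) w = comm mul u w + comm mul v w.
Proof. rewrite /comm mulDl' mulDr' opprD addrACA //. Qed.
Lemma commDr u v w : comm mul w (u + v) = comm mul w u + comm mul w v.
Proof. rewrite /comm mulDl' mulDr' opprD addrACA //. Qed.
Lemma comm0l w : comm mul 0 w = 0.
Proof. by rewrite /comm mul0l' mul0r' subr0. Qed.
Lemma comm0r w : comm mul w 0 = 0.
Proof. by rewrite /comm mul0l' mul0r' subr0. Qed.
Lemma commA u v : comm mul u v = - comm mul v u.
Proof. by rewrite /comm opprB. Qed.

Lemma comm_suml (I : Type) (r : seq I) (P : pred I) (F : I -> V) w :
  comm mul (\sum_(i <- r | P i) F i) w = \sum_(i <- r | P i) comm mul (F i) w.
Proof. exact: (big_morph (fun x => comm mul x w) (fun u v => commDl u v w) (comm0l w)). Qed.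
Lemma comm_sumr (I : Type) (r : seq I) (P : pred I) (F : I -> V) w :
  comm mul w (\sum_(i <- r | P i) F i) = \sum_(i <- r | P i) comm mul w (F i).
Proof. exact: (big_morph (fun x => comm mul w x) (fun u v => commDr u v w) (comm0r w)). Qed.
End Aux.
Arguments commA {K V mul}. Arguments comm0l {K V mul}. Arguments comm0r {K V mul}.
Arguments comm_suml {K V mul}. Arguments comm_sumr {K V mul}.

Theorem proposition4 (K : fieldType) (V : lmodType K) (mul : V -> V -> V)
    (B : V -> V -> K) (n : nat)
    (C A : 'I_n -> 'I_n -> {linear V -> V}) :
  assoc_algebra mul -> invariant_form mul B -> (1 <= n)%N ->
  (HomRel (bmul mul) (bop C) (bop A) <->
   ((forall i j : 'I_n, HomRel mul (C i j) (A j j)) /\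
    (forall (i j k : 'I_n), (j < k)%N -> forall x y : V,
       comm mul (C i j x) (C i k y) =
       C i k (comm mul (A k j x) y) + C i j (comm mul x (A j k y))))).
Proof.
move=> hA _ _.
pose P := forall (i j k : 'I_n) (x y : V),
       comm mul (C i j x) (C i k y) =
       C i k (comm mul (A k j x) y) + C i j (comm mul x (A j k y)).
have E : HomRel (bmul mul) (bop C) (bop A) <-> P.
  have commE : forall f g (i0 : 'I_n), comm (bmul mul) f g i0 = comm mul (f i0) (g i0).
    by move=> f g i0; rewrite /comm /bmul !ffunE.
  split.
  - move=> H i j k x y.
    have bopd : forall (D : 'I_n -> 'I_n -> {linear V -> V}) i j x,
        bop D [ffun l => if l == j then x else 0] i = D i j x.
      move=> D i0 j0 x0; rewrite /bop ffunE (bigD1 j0) //= ffunE eqxx big1 ?addr0 //.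
      by move=> l /negbTE hl; rewrite ffunE hl linear0.
    have := congr1 (fun f : {ffun 'I_n -> V} => f i)
      (H [ffun l => if l == j then x else 0] [ffun l => if l == k then y else 0]).
    rewrite /= commE !bopd => ->.
    rewrite /bop ffunE.
    rewrite (eq_bigr (fun l => C i l (comm mul (A l j x) (if l == k then y else 0))
         + C i l (comm mul (if l == j then x else 0) (A l k y)))); last first.
      by move=> l _; rewrite ffunE !commE !bopd !ffunE -linearD.
    rewrite big_split /= (bigD1 k) //= eqxx big1 ?addr0; last first.
      by move=> l /negbTE ->; rewrite (comm0r hA) linear0.
    rewrite (bigD1 j) //= eqxx big1 ?addr0 //.
    by move=> l /negbTE ->; rewrite (comm0l hA) linear0.
  - move=> HP u v; apply/ffunP => i.
    rewrite commE /bop !ffunE (comm_suml hA).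
    rewrite (eq_bigr (fun j => \sum_(k < n) (C i k (comm mul (A k j (u j)) (v k))
        + C i j (comm mul (u j) (A j k (v k)))))); last first.
      by move=> j _; rewrite (comm_sumr hA); apply: eq_bigr => k _; rewrite HP.
    under eq_bigr do rewrite big_split /=.
    rewrite big_split /= exchange_big /=.
    apply/esym; rewrite (eq_bigr (fun l => \sum_(m < n) C i l (comm mul (A l m (u m)) (v l))
        + \sum_(m < n) C i l (comm mul (u l) (A l m (v m))))); last first.
      move=> l _; rewrite ffunE !commE !ffunE (comm_suml hA) (comm_sumr hA).
      by rewrite linearD !linear_sum.
    by rewrite big_split.
split.
- move/E => HP; split.
  + move=> i j x y; by rewrite HP -linearD.
  + move=> i j k _ x y; exact: HP.
- case=> H1 H2; apply/E => i j k x y.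
  case: (ltngtP j k) => hjk.
  + exact: H2.
  + rewrite commA H2 // (commA (A j k y)) (commA y) !linearN opprD opprK opprK addrC //.
  + have ejk : j = k by apply: val_inj.
    subst k; by rewrite H1 linearD addrC.
Qed.
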